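(* Define a translation $A\mapsto A_{\neg\neg}$ from formulas of QHC to formulas of intuitionistic predicate calculus QH by recursion: atomic problems (including $\bot$) are unchanged; $0_{\neg\neg}=\bot$; each atomic proposition $p(t_1,\dots,t_n)\ne 0$ is sent to $\neg\neg\bar p(t_1,\dots,t_n)$, where $\bar p$ is a problem variable of the same arity assigned injectively to $p$ (and distinct from the problem variables of QHC); intuitionistic connectives and quantifiers are kept; classical $\land,\to,\forall$ become intuitionistic ($(p\to q)_{\neg\neg}=p_{\neg\neg}\to q_{\neg\neg}$, etc.); classical $\lor,\exists$ become intuitionistic and prefixed by $\neg\neg$: $(p\lor q)_{\neg\neg}=\neg\neg(p_{\neg\neg}\lor q_{\neg\neg})$, $(\exists x\,p)_{\neg\neg}=\neg\neg\exists x\,p_{\neg\neg}$; $(!p)_{\neg\neg}=p_{\neg\neg}$; $(?\alpha)_{\neg\neg}=\neg\neg\alpha_{\neg\neg}$. Then if $A_1,\dots,A_n\vdash_{\mathrm{QHC}} A$, we have $(A_1)_{\neg\neg},\dots,(A_n)_{\neg\neg}\vdash_{\mathrm{QH}} A_{\neg\neg}$.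
   Context: QHC is a two-sorted first-order calculus. Its only terms are individual variables. Every formula is either a problem (denoted by Greek letters $\alpha,\beta,\gamma,\dots$) or a proposition (denoted by Latin letters $p,q,\dots$). Atomic formulas are proposition variables $p(t_1,\dots,t_n)$ (of proposition type), problem variables $\pi(t_1,\dots,t_n)$ (of problem type), and the constants $0$ (a proposition, classical falsity) and $\bot$ (a problem, intuitionistic absurdity). Propositions are closed under the classical connectives $\land,\lor,\to$ and quantifiers $\exists,\forall$; problems are closed under the intuitionistic connectives $\land,\lor,\to$ and quantifiers $\exists,\forall$ (the same symbols are used, distinguished by the type of the arguments). $\neg p$ abbreviates $p\to 0$, $\neg\alpha$ abbreviates $\alpha\to\bot$, and $\leftrightarrow$ is defined as usual. There are two type-conversion operators: if $p$ is a proposition then $!p$ is a problem, and if $\alpha$ is a problem then $?\alpha$ is a proposition. Deductive system of QHC: all axioms and rules of classical predicate logic applied to all propositions; all postulates and rules of intuitionistic predicate logic applied to all problems; the rules $p\,/\,!p$ and $\alpha\,/\,?\alpha$; and the schemas $?!p\to p$; $\alpha\to\, !?\alpha$; $!(p\to q)\to(!p\to !q)$; $?(\alpha\to\beta)\to(?\alpha\to ?\beta)$; $!0\to\bot$; $?(\alpha\land\beta)\leftrightarrow ?\alpha\land ?\beta$; $?(\alpha\lor\beta)\leftrightarrow ?\alpha\lor ?\beta$; $?\bot\to 0$; $?\exists x\,\alpha(x)\leftrightarrow\exists x\,?\alpha(x)$; $?\forall x\,\alpha(x)\to\forall x\,?\alpha(x)$ (usual variable side conditions implicit). $\vdash A$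 means $A$ is derivable in QHC; $A\Rightarrow B$ means $\vdash A\to B$ and $A\Leftrightarrow B$ means $\vdash A\leftrightarrow B$ (with $A,B$ of the same type); $A\vdash B$ means $B$ is derivable in QHC from the premise $A$. Notation: $\Box p := ?!p$ (a proposition) and $\nabla\alpha := !?\alpha$ (a problem). QC and QH denote classical and intuitionistic predicate calculus. *)

(* Defs.v *)
From Stdlib Require Import List Arith Bool.
Import ListNotations.

(* Individual variables are named by natural numbers; the only terms are
   individual variables.  Predicate symbols (problem / proposition variables)
   are named by natural numbers and applied to a list of individual variables
   (the arity is the length of that list). *)
Definition ivar := nat.

Inductive prob : Type :=
| PVar  : nat -> list ivar -> prob
| PBot  : prob
| PAnd  : prob -> prob -> prob
| POr   : prob -> prob -> prob
| PImp  : prob -> prob -> prob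
| PEx   : ivar -> prob -> prob
| PAll  : ivar -> prob -> prob
| PBang : prop -> prob
with prop : Type :=
| QVar  : nat -> list ivar -> prop
| QZero : prop
| QAnd  : prop -> prop -> prop
| QOr   : prop -> prop -> prop
| QImp  : prop -> prop -> prop
| QEx   : ivar -> prop -> prop
| QAll  : ivar -> prop -> prop
| QQues : prob -> prop.

Inductive formula : Type :=
| FProb : prob -> formula
| FProp : prop -> formula.

Definition PNeg (a : prob) : prob := PImp a PBot.
Definition QNeg (p : prop) : prop := QImp p QZero.
Definition PIff (a b : prob) : prob := PAnd (PImp a b) (PImp b a).
Definition QIff (p q : prop) : prop := QAnd (QImp p q) (QImp q p).

Definition rn (x y : ivar) (t : ivar) : ivar := if Nat.eqb t x then y else t.

Fixpoint pfree (x : ivar) (a : prob) : bool :=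
  match a with
  | PVar _ ts => existsb (Nat.eqb x) ts
  | PBot => false
  | PAnd a b | POr a b | PImp a b => pfree x a || pfree x b
  | PEx z a | PAll z a => negb (Nat.eqb z x) && pfree x a
  | PBang p => qfree x p
  end
with qfree (x : ivar) (p : prop) : bool :=
  match p with
  | QVar _ ts => existsb (Nat.eqb x) ts
  | QZero => false
  | QAnd p q | QOr p q | QImp p q => qfree x p || qfree x q
  | QEx z p | QAll z p => negb (Nat.eqb z x) && qfree x p
  | QQues a => pfree x a
  end.

Definition ffree (x : ivar) (A : formula) : bool :=
  match A with FProb a => pfree x a | FProp p => qfree x p end.

Fixpoint psubst (x y : ivar) (a : prob) : prob :=
  match a with
  | PVar n ts => PVar n (map (rn x y) ts)
  | PBot => PBot
  | PAnd a b => PAnd (psubst x y a) (psubst x y b)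
  | POr a b => POr (psubst x y a) (psubst x y b)
  | PImp a b => PImp (psubst x y a) (psubst x y b)
  | PEx z a => if Nat.eqb z x then PEx z a else PEx z (psubst x y a)
  | PAll z a => if Nat.eqb z x then PAll z a else PAll z (psubst x y a)
  | PBang p => PBang (qsubst x y p)
  end
with qsubst (x y : ivar) (p : prop) : prop :=
  match p with
  | QVar n ts => QVar n (map (rn x y) ts)
  | QZero => QZero
  | QAnd p q => QAnd (qsubst x y p) (qsubst x y q)
  | QOr p q => QOr (qsubst x y p) (qsubst x y q)
  | QImp p q => QImp (qsubst x y p) (qsubst x y q)
  | QEx z p => if Nat.eqb z x then QEx z p else QEx z (qsubst x y p)
  | QAll z p => if Nat.eqb z x then QAll z p else QAll z (qsubst x y p)
  | QQues a => QQues (psubst x y a)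
  end.

Fixpoint pfree_for (y x : ivar) (a : prob) : bool :=
  match a with
  | PVar _ _ | PBot => true
  | PAnd a b | POr a b | PImp a b => pfree_for y x a && pfree_for y x b
  | PEx z a | PAll z a =>
      if Nat.eqb z x then true
      else if Nat.eqb z y then negb (pfree x a) else pfree_for y x a
  | PBang p => qfree_for y x p
  end
with qfree_for (y x : ivar) (p : prop) : bool :=
  match p with
  | QVar _ _ | QZero => true
  | QAnd p q | QOr p q | QImp p q => qfree_for y x p && qfree_for y x q
  | QEx z p | QAll z p =>
      if Nat.eqb z x then true
      else if Nat.eqb z y then negb (qfree x p) else qfree_for y x p
  | QQues a => pfree_for y x a
  end.

(** * Deductive system of QHC, with premises.
    [QHC_deriv G A] : A is derivable in QHC from the premises G
    (premises are used as additional axioms; all rules apply). *)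
Inductive QHC_deriv (G : list formula) : formula -> Prop :=
| qhc_hyp A : In A G -> QHC_deriv G A
| qc_K p q : QHC_deriv G (FProp (QImp p (QImp q p)))
| qc_S p q r : QHC_deriv G (FProp (QImp (QImp p (QImp q r)) (QImp (QImp p q) (QImp p r))))
| qc_andE1 p q : QHC_deriv G (FProp (QImp (QAnd p q) p))
| qc_andE2 p q : QHC_deriv G (FProp (QImp (QAnd p q) q))
| qc_andI p q : QHC_deriv G (FProp (QImp p (QImp q (QAnd p q))))
| qc_orI1 p q : QHC_deriv G (FProp (QImp p (QOr p q)))
| qc_orI2 p q : QHC_deriv G (FProp (QImp q (QOr p q)))
| qc_orE p q r : QHC_deriv G (FProp (QImp (QImp p r) (QImp (QImp q r) (QImp (QOr p q) r))))
| qc_efq p : QHC_deriv G (FProp (QImp QZero p))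
| qc_dne p : QHC_deriv G (FProp (QImp (QNeg (QNeg p)) p))
| qc_allE x y p : qfree_for y x p = true ->
    QHC_deriv G (FProp (QImp (QAll x p) (qsubst x y p)))
| qc_exI x y p : qfree_for y x p = true ->
    QHC_deriv G (FProp (QImp (qsubst x y p) (QEx x p)))
| qc_MP p q : QHC_deriv G (FProp (QImp p q)) -> QHC_deriv G (FProp p) ->
    QHC_deriv G (FProp q)
| qc_allI x p q : qfree x q = false -> QHC_deriv G (FProp (QImp q p)) ->
    QHC_deriv G (FProp (QImp q (QAll x p)))
| qc_exE x p q : qfree x q = false -> QHC_deriv G (FProp (QImp p q)) ->
    QHC_deriv G (FProp (QImp (QEx x p) q))
| qh_K a b : QHC_deriv G (FProb (PImp a (PImp b a)))
| qh_S a b c : QHC_deriv G (FProb (PImp (PImp a (PImp b c)) (PImp (PImp a b) (PImp a c))))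
| qh_andE1 a b : QHC_deriv G (FProb (PImp (PAnd a b) a))
| qh_andE2 a b : QHC_deriv G (FProb (PImp (PAnd a b) b))
| qh_andI a b : QHC_deriv G (FProb (PImp a (PImp b (PAnd a b))))
| qh_orI1 a b : QHC_deriv G (FProb (PImp a (POr a b)))
| qh_orI2 a b : QHC_deriv G (FProb (PImp b (POr a b)))
| qh_orE a b c : QHC_deriv G (FProb (PImp (PImp a c) (PImp (PImp b c) (PImp (POr a b) c))))
| qh_efq a : QHC_deriv G (FProb (PImp PBot a))
| qh_allE x y a : pfree_for y x a = true ->
    QHC_deriv G (FProb (PImp (PAll x a) (psubst x y a)))
| qh_exI x y a : pfree_for y x a = true ->
    QHC_deriv G (FProb (PImp (psubst x y a) (PEx x a)))
| qh_MP a b : QHC_deriv G (FProb (PImp a b)) -> QHC_deriv G (FProb a) ->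
    QHC_deriv G (FProb b)
| qh_allI x a b : pfree x b = false -> QHC_deriv G (FProb (PImp b a)) ->
    QHC_deriv G (FProb (PImp b (PAll x a)))
| qh_exE x a b : pfree x b = false -> QHC_deriv G (FProb (PImp a b)) ->
    QHC_deriv G (FProb (PImp (PEx x a) b))
| j_bang p : QHC_deriv G (FProp p) -> QHC_deriv G (FProb (PBang p))
| j_ques a : QHC_deriv G (FProb a) -> QHC_deriv G (FProp (QQues a))
| j_quesbang p : QHC_deriv G (FProp (QImp (QQues (PBang p)) p))
| j_bangques a : QHC_deriv G (FProb (PImp a (PBang (QQues a))))
| j_bangK p q : QHC_deriv G (FProb (PImp (PBang (QImp p q)) (PImp (PBang p) (PBang q))))
| j_quesK a b : QHC_deriv G (FProp (QImp (QQues (PImp a b)) (QImp (QQues a) (QQues b))))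
| j_bang0 : QHC_deriv G (FProb (PImp (PBang QZero) PBot))
| j_quesand a b : QHC_deriv G (FProp (QIff (QQues (PAnd a b)) (QAnd (QQues a) (QQues b))))
| j_quesor a b : QHC_deriv G (FProp (QIff (QQues (POr a b)) (QOr (QQues a) (QQues b))))
| j_quesbot : QHC_deriv G (FProp (QImp (QQues PBot) QZero))
| j_quesex x a : QHC_deriv G (FProp (QIff (QQues (PEx x a)) (QEx x (QQues a))))
| j_quesall x a : QHC_deriv G (FProp (QImp (QQues (PAll x a)) (QAll x (QQues a)))).

Inductive iform : Type :=
| IVar : nat -> list ivar -> iform
| IBot : iform
| IAnd : iform -> iform -> iform
| IOr  : iform -> iform -> iform
| IImp : iform -> iform -> iform
| IEx  : ivar -> iform -> iform
| IAll : ivar -> iform -> iform.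

Definition INeg (a : iform) : iform := IImp a IBot.

Fixpoint ifree (x : ivar) (a : iform) : bool :=
  match a with
  | IVar _ ts => existsb (Nat.eqb x) ts
  | IBot => false
  | IAnd a b | IOr a b | IImp a b => ifree x a || ifree x b
  | IEx z a | IAll z a => negb (Nat.eqb z x) && ifree x a
  end.

Fixpoint isubst (x y : ivar) (a : iform) : iform :=
  match a with
  | IVar n ts => IVar n (map (rn x y) ts)
  | IBot => IBot
  | IAnd a b => IAnd (isubst x y a) (isubst x y b)
  | IOr a b => IOr (isubst x y a) (isubst x y b)
  | IImp a b => IImp (isubst x y a) (isubst x y b)
  | IEx z a => if Nat.eqb z x then IEx z a else IEx z (isubst x y a)
  | IAll z a => if Nat.eqb z x then IAll z a else IAll z (isubst x y a)
  end.

Fixpoint ifree_for (y x : ivar) (a : iform) : bool :=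
  match a with
  | IVar _ _ | IBot => true
  | IAnd a b | IOr a b | IImp a b => ifree_for y x a && ifree_for y x b
  | IEx z a | IAll z a =>
      if Nat.eqb z x then true
      else if Nat.eqb z y then negb (ifree x a) else ifree_for y x a
  end.

Inductive QH_deriv (G : list iform) : iform -> Prop :=
| ih_hyp A : In A G -> QH_deriv G A
| ih_K a b : QH_deriv G (IImp a (IImp b a))
| ih_S a b c : QH_deriv G (IImp (IImp a (IImp b c)) (IImp (IImp a b) (IImp a c)))
| ih_andE1 a b : QH_deriv G (IImp (IAnd a b) a)
| ih_andE2 a b : QH_deriv G (IImp (IAnd a b) b)
| ih_andI a b : QH_deriv G (IImp a (IImp b (IAnd a b)))
| ih_orI1 a b : QH_deriv G (IImp a (IOr a b))
| ih_orI2 a b : QH_deriv G (IImp b (IOr a b))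
| ih_orE a b c : QH_deriv G (IImp (IImp a c) (IImp (IImp b c) (IImp (IOr a b) c)))
| ih_efq a : QH_deriv G (IImp IBot a)
| ih_allE x y a : ifree_for y x a = true ->
    QH_deriv G (IImp (IAll x a) (isubst x y a))
| ih_exI x y a : ifree_for y x a = true ->
    QH_deriv G (IImp (isubst x y a) (IEx x a))
| ih_MP a b : QH_deriv G (IImp a b) -> QH_deriv G a -> QH_deriv G b
| ih_allI x a b : ifree x b = false -> QH_deriv G (IImp b a) ->
    QH_deriv G (IImp b (IAll x a))
| ih_exE x a b : ifree x b = false -> QH_deriv G (IImp a b) ->
    QH_deriv G (IImp (IEx x a) b).

(** Problem variable pi_n is sent to the QH predicate variable 2n, and the
    problem variable \bar p_n assigned to the proposition variable p_n is the
    QH predicate variable 2n+1 (injective, and distinct from the images of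
    the problem variables of QHC). *)
Fixpoint tr_prob (a : prob) : iform :=
  match a with
  | PVar n ts => IVar (2 * n) ts
  | PBot => IBot
  | PAnd a b => IAnd (tr_prob a) (tr_prob b)
  | POr a b => IOr (tr_prob a) (tr_prob b)
  | PImp a b => IImp (tr_prob a) (tr_prob b)
  | PEx x a => IEx x (tr_prob a)
  | PAll x a => IAll x (tr_prob a)
  | PBang p => tr_prop p
  end
with tr_prop (p : prop) : iform :=
  match p with
  | QVar n ts => INeg (INeg (IVar (2 * n + 1) ts))
  | QZero => IBot
  | QAnd p q => IAnd (tr_prop p) (tr_prop q)
  | QOr p q => INeg (INeg (IOr (tr_prop p) (tr_prop q)))
  | QImp p q => IImp (tr_prop p) (tr_prop q)
  | QEx x p => INeg (INeg (IEx x (tr_prop p)))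
  | QAll x p => IAll x (tr_prop p)
  | QQues a => INeg (INeg (tr_prob a))
  end.

Definition tr (A : formula) : iform :=
  match A with FProb a => tr_prob a | FProp p => tr_prop p end.

(* Main.v *)
Require Import Defs.
From Stdlib Require Import List Arith Bool.
Import ListNotations.

Scheme prob_mut := Induction for prob Sort Prop
with prop_mut := Induction for prop Sort Prop.

Lemma tr_subst x y :
  (forall a, tr_prob (psubst x y a) = isubst x y (tr_prob a)) /\
  (forall p, tr_prop (qsubst x y p) = isubst x y (tr_prop p)).
Proof.
  split; [apply (prob_mut (fun a => tr_prob (psubst x y a) = isubst x y (tr_prob a))
                   (fun p => tr_prop (qsubst x y p) = isubst x y (tr_prop p)))
        |apply (prop_mut (fun a => tr_prob (psubst x y a) = isubst x y (tr_prob a))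
                   (fun p => tr_prop (qsubst x y p) = isubst x y (tr_prop p)))];
  intros; simpl; unfold INeg; try congruence;
  try (destruct (Nat.eqb _ x); simpl; unfold INeg; congruence).
Qed.

Lemma tr_free x :
  (forall a, ifree x (tr_prob a) = pfree x a) /\
  (forall p, ifree x (tr_prop p) = qfree x p).
Proof.
  split; [apply (prob_mut (fun a => ifree x (tr_prob a) = pfree x a)
                   (fun p => ifree x (tr_prop p) = qfree x p))
        |apply (prop_mut (fun a => ifree x (tr_prob a) = pfree x a)
                   (fun p => ifree x (tr_prop p) = qfree x p))];
  intros; simpl; unfold INeg; simpl; rewrite ?orb_false_r; congruence.
Qed.

Lemma tr_free_for y x :
  (forall a, ifree_for y x (tr_prob a) = pfree_for y x a) /\
  (forall p, ifree_for y x (tr_prop p) = qfree_for y x p).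
Proof.
  split; [apply (prob_mut (fun a => ifree_for y x (tr_prob a) = pfree_for y x a)
                   (fun p => ifree_for y x (tr_prop p) = qfree_for y x p))
        |apply (prop_mut (fun a => ifree_for y x (tr_prob a) = pfree_for y x a)
                   (fun p => ifree_for y x (tr_prop p) = qfree_for y x p))];
  intros; simpl; unfold INeg; simpl; rewrite ?andb_true_r; try congruence;
  rewrite ?(proj1 (tr_free x)), ?(proj2 (tr_free x)); try congruence;
  match goal with H : _ = _ |- _ => rewrite H; reflexivity end.
Qed.

Lemma isubst_id x a : isubst x x a = a.
Proof.
  induction a; simpl; try congruence.
  - f_equal. induction l; simpl; auto. f_equal; auto. unfold rn.
    destruct (Nat.eqb a x) eqn:E; auto. apply Nat.eqb_eq in E; auto.
  - destruct (Nat.eqb i x); congruence.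
  - destruct (Nat.eqb i x); congruence.
Qed.

Lemma ifree_for_refl x a : ifree_for x x a = true.
Proof.
  induction a; simpl; rewrite ?IHa1, ?IHa2; auto;
  destruct (Nat.eqb i x); auto.
Qed.

Inductive PD (G : list iform) (H : list iform) : iform -> Prop :=
| pd_hyp a : In a H -> PD G H a
| pd_ax a : QH_deriv G a -> PD G H a
| pd_mp a b : PD G H (IImp a b) -> PD G H a -> PD G H b.

Lemma imp_refl G a : QH_deriv G (IImp a a).
Proof.
  eapply ih_MP. eapply ih_MP. apply (ih_S G a (IImp a a) a).
  apply ih_K. apply (ih_K G a a).
Qed.

Lemma ded G H h a : PD G (h :: H) a -> PD G H (IImp h a).
Proof.
  induction 1.
  - destruct H0 as [<-|H0].
    + apply pd_ax, imp_refl.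
    + eapply pd_mp. apply pd_ax, ih_K. apply pd_hyp; auto.
  - eapply pd_mp. apply pd_ax, ih_K. apply pd_ax; auto.
  - eapply pd_mp. eapply pd_mp. apply pd_ax, ih_S. eauto. eauto.
Qed.

Lemma pd_sound G a : PD G [] a -> QH_deriv G a.
Proof.
  induction 1; [destruct H| |eapply ih_MP]; eauto.
Qed.

Ltac hyp := apply pd_hyp; simpl; repeat (first [left; reflexivity | right]).
Ltac mpa t := eapply pd_mp; [apply pd_ax; apply t|].
Ltac mph := eapply pd_mp; [hyp|].
Ltac dd := apply ded.
Ltac mpx t := apply (pd_mp _ _ t); [hyp|].

Lemma pd_and G H a b : PD G H a -> PD G H b -> PD G H (IAnd a b).
Proof. intros. eapply pd_mp; [|exact H1]. eapply pd_mp; [|exact H0]. apply pd_ax, ih_andI. Qed.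

Lemma pd_or G H a b c : PD G H (IImp a c) -> PD G H (IImp b c) -> PD G H (IOr a b) -> PD G H c.
Proof. intros. eapply pd_mp; [|exact H2]. eapply pd_mp; [|exact H1]. eapply pd_mp; [|exact H0]. apply pd_ax, ih_orE. Qed.

Lemma pd_andE1 G H a b : PD G H (IAnd a b) -> PD G H a.
Proof. intros. eapply pd_mp; [apply pd_ax, ih_andE1|exact H0]. Qed.
Lemma pd_andE2 G H a b : PD G H (IAnd a b) -> PD G H b.
Proof. intros. eapply pd_mp; [apply pd_ax, ih_andE2|exact H0]. Qed.

Lemma nn_intro G a : QH_deriv G (IImp a (INeg (INeg a))).
Proof. apply pd_sound. dd. dd. mpx a. hyp. Qed.

Lemma trans G a b c : QH_deriv G (IImp a b) -> QH_deriv G (IImp b c) -> QH_deriv G (IImp a c).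
Proof. intros. apply pd_sound. dd. mpa H0. mpa H. hyp. Qed.

Lemma nn_mono G a b : QH_deriv G (IImp a b) -> QH_deriv G (IImp (INeg (INeg a)) (INeg (INeg b))).
Proof. intros. apply pd_sound. dd. dd. mpx (INeg a). dd. mpx b. mpa H. hyp. Qed.

Lemma tnn G a : QH_deriv G (IImp (INeg (INeg (INeg a))) (INeg a)).
Proof. apply pd_sound. dd. dd. mpx (INeg (INeg a)). mpa nn_intro. hyp. Qed.

Lemma stab G p : QH_deriv G (IImp (INeg (INeg (tr_prop p))) (tr_prop p)).
Proof.
  induction p; simpl.
  - apply tnn.
  - apply pd_sound. dd. mpx (INeg IBot). apply pd_ax, imp_refl.
  - apply pd_sound. dd. apply pd_and.
    + mpa IHp1. mpa (nn_mono G (IAnd (tr_prop p1) (tr_prop p2))). apply ih_andE1. hyp.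
    + mpa IHp2. mpa (nn_mono G (IAnd (tr_prop p1) (tr_prop p2))). apply ih_andE2. hyp.
  - apply tnn.
  - apply pd_sound. dd. dd. mpa IHp2. dd. mpx (INeg (IImp (tr_prop p1) (tr_prop p2))). dd. mpx (tr_prop p2). mpx (tr_prop p1). hyp.
  - apply tnn.
  - apply ih_allI. simpl. destruct (Nat.eqb i i) eqn:E; auto. rewrite Nat.eqb_refl in E; discriminate.
    eapply trans. apply nn_mono. pose proof (ih_allE G i i (tr_prop p) (ifree_for_refl _ _)).
    rewrite isubst_id in H. exact H. exact IHp.
  - apply tnn.
Qed.

Lemma ex_not_free x a : ifree x (IEx x a) = false.
Proof. simpl. rewrite Nat.eqb_refl. auto. Qed.
Lemma all_not_free x a : ifree x (IAll x a) = false.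
Proof. simpl. rewrite Nat.eqb_refl. auto. Qed.

Lemma allE_id G x a : QH_deriv G (IImp (IAll x a) a).
Proof. pose proof (ih_allE G x x a (ifree_for_refl _ _)). rewrite isubst_id in H. exact H. Qed.
Lemma exI_id G x a : QH_deriv G (IImp a (IEx x a)).
Proof. pose proof (ih_exI G x x a (ifree_for_refl _ _)). rewrite isubst_id in H. exact H. Qed.

Theorem theorem3p4 (Gamma : list formula) (A : formula) :
  QHC_deriv Gamma A -> QH_deriv (map tr Gamma) (tr A).
Proof.
  induction 1; simpl in *.
  - apply ih_hyp. apply in_map. auto.
  - apply ih_K.
  - apply ih_S.
  - apply ih_andE1.
  - apply ih_andE2.
  - apply ih_andI.
  - apply pd_sound. dd. dd. mpx (IOr (tr_prop p) (tr_prop q)). mpa ih_orI1. hyp.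
  - apply pd_sound. dd. dd. mpx (IOr (tr_prop p) (tr_prop q)). mpa ih_orI2. hyp.
  - apply pd_sound. dd. dd. dd. mpa stab. dd. mpx (INeg (IOr (tr_prop p) (tr_prop q))). dd. mpx (tr_prop r).
    apply (pd_or _ _ (tr_prop p) (tr_prop q)); hyp.
  - apply ih_efq.
  - apply stab.
  - rewrite (proj2 (tr_subst x y)). apply ih_allE. rewrite (proj2 (tr_free_for y x)); auto.
  - rewrite (proj2 (tr_subst x y)). eapply trans. apply ih_exI.
    rewrite (proj2 (tr_free_for y x)); auto. apply nn_intro.
  - eapply ih_MP; eauto.
  - apply ih_allI; auto. rewrite (proj2 (tr_free x)); auto.
  - apply (trans _ _ (INeg (INeg (tr_prop q)))). apply nn_mono. apply ih_exE. rewrite (proj2 (tr_free x)); auto. exact IHQHC_deriv.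
    apply stab.
  - apply ih_K.
  - apply ih_S.
  - apply ih_andE1.
  - apply ih_andE2.
  - apply ih_andI.
  - apply ih_orI1.
  - apply ih_orI2.
  - apply ih_orE.
  - apply ih_efq.
  - rewrite (proj1 (tr_subst x y)). apply ih_allE. rewrite (proj1 (tr_free_for y x)); auto.
  - rewrite (proj1 (tr_subst x y)). apply ih_exI. rewrite (proj1 (tr_free_for y x)); auto.
  - eapply ih_MP; eauto.
  - apply ih_allI; auto. rewrite (proj1 (tr_free x)); auto.
  - apply ih_exE; auto. rewrite (proj1 (tr_free x)); auto.
  - auto.
  - eapply ih_MP. apply nn_intro. auto.
  - apply stab.
  - apply nn_intro.
  - apply imp_refl.
  - apply pd_sound. dd. dd. dd. mpx (INeg (tr_prob a)). dd. mpx (INeg (IImp (tr_prob a) (tr_prob b))). dd. mpx (tr_prob b). mpx (tr_prob a). hyp.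
  - apply imp_refl.
  - apply pd_sound. apply pd_and.
    + dd. apply pd_and.
      * mpa nn_mono. apply ih_andE1. hyp.
      * mpa nn_mono. apply ih_andE2. hyp.
    + dd. dd. apply (pd_mp _ _ (INeg (tr_prob a))). apply (pd_andE1 _ _ _ (INeg (INeg (tr_prob b)))). hyp.
      dd. apply (pd_mp _ _ (INeg (tr_prob b))). apply (pd_andE2 _ _ (INeg (INeg (tr_prob a)))). hyp.
      dd. mpx (IAnd (tr_prob a) (tr_prob b)). apply pd_and; hyp.
  - apply pd_sound. apply pd_and.
    + apply pd_ax. apply nn_mono. apply pd_sound. dd.
      apply (pd_or _ _ (tr_prob a) (tr_prob b)); [| |hyp].
      * dd. mpa ih_orI1. mpa nn_intro. hyp.
      * dd. mpa ih_orI2. mpa nn_intro. hyp.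
    + dd. dd. mpx (INeg (IOr (INeg (INeg (tr_prob a))) (INeg (INeg (tr_prob b))))). dd.
      apply (pd_or _ _ (INeg (INeg (tr_prob a))) (INeg (INeg (tr_prob b)))); [| |hyp].
      * dd. mpx (INeg (tr_prob a)). dd. mpx (IOr (tr_prob a) (tr_prob b)). mpa ih_orI1. hyp.
      * dd. mpx (INeg (tr_prob b)). dd. mpx (IOr (tr_prob a) (tr_prob b)). mpa ih_orI2. hyp.
  - apply pd_sound. dd. mpx (INeg IBot). apply pd_ax, imp_refl.
  - apply pd_sound. apply pd_and; apply pd_ax.
    + apply nn_mono. apply ih_exE. apply ex_not_free.
      eapply trans. apply nn_intro. apply exI_id.
    + apply (trans _ _ (INeg (INeg (INeg (INeg (IEx x (tr_prob a))))))). apply nn_mono. apply ih_exE.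
      simpl. rewrite Nat.eqb_refl. auto.
      apply nn_mono. apply exI_id. apply tnn.
  - apply ih_allI. simpl. rewrite Nat.eqb_refl. auto.
    apply nn_mono. apply allE_id.
Qed.
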